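(* Let $H=(V,E)$ be a hypergraph whose vertex set $V$ is a partition of $[n]$ into sets of cardinality at least $2$, and suppose $H$ is $\alpha$-acyclic. Let $T=(E,\mathcal{E})$ be a join tree of $H$. Then \[ \mathrm{MC}^H=\Big\{w\in \mathbb{R}_{\geq 0}^{\mathcal{J}^H}\ \Big|\ w(I)=1\ \forall\, I\in V;\quad w_i - \sum_{J\in \mathcal{J}^e:\, J\ni i}w_J = 0\ \ \forall\, e\in E,\ \forall\, i\in I\in e; \] \[ \sum_{J\in \mathcal{J}^e:\, J\supseteq J_0} w_J -\sum_{J\in \mathcal{J}^{e'}:\, J\supseteq J_0}w_J = 0\ \ \forall\, \{e,e'\}\in \mathcal{E} \text{ with } |e\cap e'|>1,\ \forall\, J_0\in \mathcal{J}^{e\cap e'}\Big\}. \]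
   Context: Let $n$ be a positive integer, $[n]=\{1,\dots,n\}$. A hypergraph $H=(V,E)$ here has as vertex set $V$ a family of pairwise disjoint subsets of $[n]$, each of cardinality at least $2$, and hyperedge set $E$ consisting of subsets $e\subseteq V$ with $|e|\ge 2$. Write $L(V)=\{\{I\}: I\in V\}$. For a nonempty $e\subseteq V$, $\mathcal{J}^e$ denotes the family of sets $J\subseteq \bigcup_{I\in e} I$ with $|J\cap I|=1$ for every $I\in e$. Let $\mathcal{J}^H=\bigcup_{e\in L(V)\cup E}\mathcal{J}^e$ (it contains every singleton $\{i\}$, $i\in\bigcup V$). For $w\in\mathbb{R}^{\mathcal{J}^H}$ write $w_i=w_{\{i\}}$ and $w(A)=\sum_{i\in A}w_i$. Let $\mathscr{S}^H=\{w\in\{0,1\}^{\mathcal{J}^H}: w(I)=1\ \forall I\in V;\ w_J=\prod_{i\in J}w_i\ \forall J\in\mathcal{J}^H, |J|>1\}$ and $\mathrm{MC}^H=\operatorname{conv}\mathscr{S}^H$. A join tree of $H$ is a tree $T$ with node set $E$ such that for any two distinct nodes $e_1,e_2$, every node $e$ on the unique path in $T$ between them satisfies $e_1\cap e_2\subseteq e$. $H$ is $\alpha$-acyclic in the sense of Fagin; equivalently (Beeri et al.) $H$ admits a join tree. *)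

(* Defs.v *)
From HB Require Import structures.
From mathcomp Require Import all_boot all_order all_algebra.
From mathcomp Require Import reals.
Set Implicit Arguments. Unset Strict Implicit. Unset Printing Implicit Defensive.
Import Order.TTheory GRing.Theory Num.Theory.
Local Open Scope ring_scope.

Notation vtx n := {set 'I_n}.
Notation hedge n := {set {set 'I_n}}.

Definition Jfam n (e : hedge n) : {set vtx n} :=
  [set J : vtx n | (J \subset \bigcup_(I in e) I) && [forall I in e, #|J :&: I| == 1%N]].

Definition LV n (V : hedge n) : {set hedge n} := [set [set I] | I in V].

Definition JH n (V : hedge n) (E : {set hedge n}) : {set vtx n} :=
  \bigcup_(e in LV V :|: E) Jfam e.

(* Vectors of R^{J^H} are represented as functions on all subsets of [n]
   vanishing outside J^H. *)
Definition vec (R : realType) n := {ffun vtx n -> R}.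

Definition supp_in (R : realType) n (V : hedge n) (E : {set hedge n}) (w : vec R n) : Prop :=
  forall J : vtx n, J \notin JH V E -> w J = 0.

Definition wsum (R : realType) n (w : vec R n) (A : vtx n) : R :=
  \sum_(i in A) w [set i].

Definition SH (R : realType) n (V : hedge n) (E : {set hedge n}) (w : vec R n) : Prop :=
  [/\ supp_in V E w,
      (forall J, J \in JH V E -> w J = 0 \/ w J = 1),
      (forall I, I \in V -> wsum w I = 1) &
      (forall J, J \in JH V E -> (1 < #|J|)%N -> w J = \prod_(i in J) w [set i])].

Definition conv (R : realType) n (P : vec R n -> Prop) (w : vec R n) : Prop :=
  exists (k : nat) (pts : 'I_k -> vec R n) (lam : 'I_k -> R),
    [/\ (forall j, P (pts j)), (forall j, 0 <= lam j), \sum_(j < k) lam j = 1 &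
        forall J, w J = \sum_(j < k) lam j * pts j J].

Definition MC (R : realType) n (V : hedge n) (E : {set hedge n}) (w : vec R n) : Prop :=
  conv (SH V E) w.

Definition has_cycle n (t : rel (hedge n)) (E : {set hedge n}) : Prop :=
  exists (v : hedge n) (p : seq (hedge n)),
    [/\ (2 <= size p)%N, all (mem E) (v :: p), uniq (v :: p), path t v p & t (last v p) v].

Definition connected_on n (t : rel (hedge n)) (E : {set hedge n}) : Prop :=
  forall e1 e2, e1 \in E -> e2 \in E ->
    exists p : seq (hedge n), [/\ all (mem E) p, path t e1 p & last e1 p = e2].

Definition is_tree n (E : {set hedge n}) (t : rel (hedge n)) : Prop :=
  [/\ (forall e e', t e e' -> (e \in E) && (e' \in E)),
      symmetric t, irreflexive t, connected_on t E & ~ has_cycle t E].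

Definition join_tree n (E : {set hedge n}) (t : rel (hedge n)) : Prop :=
  is_tree E t /\
  forall e1 e2, e1 \in E -> e2 \in E -> e1 != e2 ->
    forall p : seq (hedge n), path t e1 p -> last e1 p = e2 -> uniq (e1 :: p) ->
      forall e, e \in e1 :: p -> e1 :&: e2 \subset e.

(* alpha-acyclic, via the Beeri et al. characterization given in the paper *)
Definition alpha_acyclic n (E : {set hedge n}) : Prop :=
  exists t : rel (hedge n), join_tree E t.

Definition RHSpolytope (R : realType) n (V : hedge n) (E : {set hedge n}) (t : rel (hedge n))
  (w : vec R n) : Prop :=
  [/\ supp_in V E w,
      (forall J, J \in JH V E -> 0 <= w J),
      (forall I, I \in V -> wsum w I = 1),
      (forall e I i, e \in E -> I \in e -> i \in I ->
         w [set i] - \sum_(J in Jfam e | i \in J) w J = 0) &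
      (forall e e', e \in E -> e' \in E -> t e e' -> (1 < #|e :&: e'|)%N ->
         forall J0, J0 \in Jfam (e :&: e') ->
           \sum_(J in Jfam e | J0 \subset J) w J
             - \sum_(J in Jfam e' | J0 \subset J) w J = 0)].

(* Main.v *)
Require Import Defs.
From HB Require Import structures.
From mathcomp Require Import all_boot all_order all_algebra.
From mathcomp Require Import reals.
Import Order.TTheory GRing.Theory Num.Theory.
Local Open Scope ring_scope.
Set Implicit Arguments. Unset Strict Implicit. Unset Printing Implicit Defensive.


Section Comb.
Variable n : nat.
Implicit Types (U : {set {set 'I_n}}) (J K : {set 'I_n}).

Lemma JfamE U J : (J \in Jfam U) = (J \subset cover U) && [forall I in U, #|J :&: I| == 1%N].
Proof. by rewrite inE. Qed.

Lemma Jfam_sub U J : J \in Jfam U -> J \subset cover U.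
Proof. by rewrite JfamE => /andP[]. Qed.

Lemma Jfam_card U J I : J \in Jfam U -> I \in U -> #|J :&: I| = 1%N.
Proof. by rewrite JfamE => /andP[_ /forall_inP H] /H /eqP. Qed.

Lemma Jfam_intro U J : J \subset cover U -> (forall I, I \in U -> #|J :&: I| = 1%N) -> J \in Jfam U.
Proof. by move=> H1 H2; rewrite JfamE H1; apply/forall_inP => I /H2 ->. Qed.

Lemma sub_cover U I : I \in U -> I \subset cover U.
Proof. by move=> HI; apply: bigcup_sup. Qed.

Lemma cover_sub U U' : U' \subset U -> cover U' \subset cover U.
Proof.
move=> H; apply/subsetP => x /bigcupP[I HI xI]; apply/bigcupP; exists I => //.
exact: (subsetP H).
Qed.

Lemma Jfam_restr U U' J : U' \subset U -> J \in Jfam U -> J :&: cover U' \in Jfam U'.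
Proof.
move=> sU HJ; apply: Jfam_intro; first exact: subsetIr.
move=> I HI; rewrite -setIA (setIidPr (sub_cover HI)).
exact: Jfam_card HJ (subsetP sU _ HI).
Qed.

Lemma card1_eq K J : K \subset J -> #|K| = 1%N -> #|J| = 1%N -> K = J.
Proof. by move=> s h1 h2; apply/eqP; rewrite eqEcard s h1 h2. Qed.

Lemma Jfam_uniq U U' J K : U' \subset U -> J \in Jfam U -> K \in Jfam U' -> K \subset J ->
  K = J :&: cover U'.
Proof.
move=> sU HJ HK sKJ; apply/eqP; rewrite eqEsubset subsetI sKJ (Jfam_sub HK) /=.
apply/subsetP => x /setIP[xJ /bigcupP[I HI xI]].
have e := card1_eq (setSI I sKJ) (Jfam_card HK HI) (Jfam_card HJ (subsetP sU _ HI)).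
have : x \in J :&: I by rewrite inE xJ.
by rewrite -e => /setIP[].
Qed.

Lemma Jfam_self U J K : J \in Jfam U -> K \in Jfam U -> K \subset J -> K = J.
Proof.
move=> HJ HK s; rewrite (Jfam_uniq (subxx U) HJ HK s).
exact/setIidPl/Jfam_sub.
Qed.

Lemma cover_setU U1 U2 : cover (U1 :|: U2) = cover U1 :|: cover U2.
Proof. by rewrite /cover bigcup_setU. Qed.

Lemma coverI_tr V U1 U2 : trivIset V -> U1 \subset V -> U2 \subset V ->
  cover U1 :&: cover U2 = cover (U1 :&: U2).
Proof.
move=> /trivIsetP tV s1 s2; apply/eqP; rewrite eqEsubset; apply/andP; split.
  apply/subsetP => x /setIP[/bigcupP[I1 H1 x1] /bigcupP[I2 H2 x2]].
  have e : I1 = I2.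
    apply/eqP; apply/negPn/negP => ne.
    have := tV _ _ (subsetP s1 _ H1) (subsetP s2 _ H2) ne.
    by move/disjointFr => /(_ x x1); rewrite x2.
  by apply/bigcupP; exists I1; rewrite // inE H1 e H2.
by rewrite subsetI !cover_sub // ?subsetIl ?subsetIr.
Qed.

End Comb.


Section Prob.
Variable R : realType.
Variable n : nat.
Implicit Types (U : {set {set 'I_n}}) (J K : {set 'I_n}) (p q : {set 'I_n} -> R).

Definition marg p K := \sum_(J : {set 'I_n} | K \subset J) p J.
Definition supp U p := forall J, J \notin Jfam U -> p J = 0.
Definition dist U p := [/\ forall J, 0 <= p J, supp U p & \sum_(J : {set 'I_n}) p J = 1].

Lemma sum_pred1 (P : pred {set 'I_n}) S (F : {set 'I_n} -> R) :
  \sum_(J | P J) (if J == S then F J else 0) = if P S then F S else 0.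
Proof.
rewrite -big_mkcondr; case: ifP => PS.
  rewrite (eq_bigl (fun J => J == S)) ?big_pred1_eq // => J.
  by have [->|] := eqVneq J S; rewrite ?PS ?andbF.
rewrite big_pred0 // => J; have [->|] := eqVneq J S; rewrite ?PS ?andbF //.
Qed.

Lemma marg_supp U p K : supp U p -> marg p K = \sum_(J in Jfam U | K \subset J) p J.
Proof.
move=> sp; rewrite /marg [RHS]big_mkcondl /=; apply: eq_bigr => J _.
by case: ifP => // /negbT /sp.
Qed.

Lemma MM U U' p K : supp U p -> U' \subset U -> K \subset cover U' ->
  \sum_(J' in Jfam U' | K \subset J') marg p J' = marg p K.
Proof.
move=> sp sU sK; rewrite /marg.
rewrite (exchange_big_dep (fun J => K \subset J)) /=; last first.
  by move=> J' J /andP[_ a] b; apply: subset_trans a b.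
apply: eq_bigr => J KJ.
case HJ: (J \in Jfam U); last by rewrite big1 // => *; rewrite sp ?HJ.
rewrite (eq_bigl (fun J' => J' == J :&: cover U')) ?big_pred1_eq // => J'.
apply/idP/eqP.
  by case/andP => /andP[h1 _] h2; apply: Jfam_uniq HJ h1 h2.
move=> ->; rewrite (Jfam_restr sU HJ) subsetIl subsetI KJ sK.
by [].
Qed.

Lemma marg_self U p K : supp U p -> K \in Jfam U -> marg p K = p K.
Proof.
move=> sp HK; rewrite (marg_supp _ sp).
rewrite (eq_bigl (fun J => J == K)) ?big_pred1_eq // => J.
apply/idP/eqP => [/andP[HJ s]|->]; last by rewrite HK subxx.
by apply/esym; apply: Jfam_self HJ HK s.
Qed.

Lemma marg_ge0 p K : (forall J, 0 <= p J) -> 0 <= marg p K.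
Proof. by move=> h; apply: sumr_ge0. Qed.

Lemma marg_le p K J : (forall J, 0 <= p J) -> K \subset J -> p J <= marg p K.
Proof.
move=> h s; rewrite /marg (bigD1 J) //= lerDl; apply: sumr_ge0 => *; exact: h.
Qed.

Lemma marg0 p : marg p set0 = \sum_(J : {set 'I_n}) p J.
Proof. by rewrite /marg; apply: eq_bigl => J; rewrite sub0set. Qed.

Lemma marg_lift U U1 p r K : supp U r -> supp U1 p -> U1 \subset U ->
  (forall J1, J1 \in Jfam U1 -> marg r J1 = p J1) -> K \subset cover U1 ->
  marg r K = marg p K.
Proof.
move=> sr sp sU h sK; rewrite -(MM sr sU sK) (marg_supp _ sp).
by apply: eq_bigr => J /andP[/h].
Qed.

End Prob.


Section Glue.
Variable R : realType.
Variable n : nat.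
Variable V : {set {set 'I_n}}.
Hypothesis tV : trivIset V.
Implicit Types (U : {set {set 'I_n}}) (J K : {set 'I_n}) (p q : {set 'I_n} -> R).

Definition glue U1 U2 p q J :=
  if J \in Jfam (U1 :|: U2) then
    p (J :&: cover U1) * q (J :&: cover U2) / marg q (J :&: cover U1 :&: cover U2)
  else 0.

Lemma glue_marg1 U1 U2 p q : U1 \subset V -> U2 \subset V ->
  (forall J, 0 <= p J) -> supp U1 p -> (forall J, 0 <= q J) -> supp U2 q ->
  (forall K, K \in Jfam (U1 :&: U2) -> marg p K = marg q K) ->
  forall J1, J1 \in Jfam U1 -> marg (glue U1 U2 p q) J1 = p J1.
Proof.
move=> s1 s2 p0 sp q0 sq cons J1 HJ1.
set A := cover U1; set B := cover U2.
have AB : A :&: B = cover (U1 :&: U2) := coverI_tr tV s1 s2.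
set K := J1 :&: B.
have KC : K \in Jfam (U1 :&: U2).
  have -> : K = J1 :&: cover (U1 :&: U2).
    by rewrite -AB setIA (setIidPl (Jfam_sub HJ1)).
  exact: Jfam_restr (subsetIl _ _) HJ1.
rewrite /marg.
transitivity (\sum_(J : {set 'I_n} | (J1 \subset J) && (J \in Jfam (U1 :|: U2)))
                 p J1 / marg q K * q (J :&: B)).
  rewrite big_mkcondr /=; apply: eq_bigr => J s.
  rewrite /glue; case: ifP => HJ //.
  have e1 : J1 = J :&: A := Jfam_uniq (subsetUl U1 U2) HJ HJ1 s.
  by rewrite -e1 -/K mulrAC.
rewrite -mulr_sumr.
have -> : \sum_(J : {set 'I_n} | (J1 \subset J) && (J \in Jfam (U1 :|: U2))) q (J :&: B) = marg q K.
  rewrite (marg_supp _ sq).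
  rewrite [RHS](reindex_onto (fun J => J :&: B) (fun J2 => J1 :|: J2)) /=; last first.
    move=> J2 /andP[HJ2 sK].
    by rewrite setIUl (setIidPl (Jfam_sub HJ2)) (setUidPr sK).
  apply: eq_bigl => J; apply/idP/idP.
    case/andP => s HJ.
    have e1 : J1 = J :&: A := Jfam_uniq (subsetUl U1 U2) HJ HJ1 s.
    rewrite (Jfam_restr (subsetUr U1 U2) HJ) /= setSI //=.
    rewrite e1 -setIUr -cover_setU (setIidPl (Jfam_sub HJ)) //.
  case/andP => /andP[HJ2 sK] /eqP eJ.
  set J2 := J :&: B in HJ2 sK eJ *.
  have eK : K = J2 :&: cover (U1 :&: U2) := Jfam_uniq (subsetIr U1 U2) HJ2 KC sK.
  rewrite -eJ subsetUl /=; apply: Jfam_intro.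
    by rewrite cover_setU; apply: setUSS; [exact: Jfam_sub HJ1 | exact: Jfam_sub HJ2].
  move=> I /setUP[] HI.
    have sub : J2 :&: I \subset J1 :&: I.
      apply/subsetP => x /setIP[x2 xI]; rewrite inE xI andbT.
      have : x \in K.
        rewrite eK inE x2 -AB inE (subsetP (sub_cover HI)) //=.
        exact: (subsetP (Jfam_sub HJ2)).
      by rewrite inE => /andP[].
    by rewrite setIUl (setUidPl sub); exact: Jfam_card HJ1 HI.
  have sub : J1 :&: I \subset J2 :&: I.
    apply/subsetP => x /setIP[x1 xI]; rewrite inE xI andbT.
    apply: (subsetP sK); rewrite inE x1.
    exact: (subsetP (sub_cover HI)).
  by rewrite setIUl (setUidPr sub); exact: Jfam_card HJ2 HI.
have [m0|mn0] := eqVneq (marg q K) 0; last by rewrite divfK.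
rewrite m0 mulr0; apply/esym/le_anti; rewrite p0 andbT -m0 -cons //.
by apply: marg_le => //; exact: subsetIl.
Qed.

Lemma glue_sym U1 U2 p q : U1 \subset V -> U2 \subset V ->
  (forall K, K \in Jfam (U1 :&: U2) -> marg p K = marg q K) ->
  forall J, glue U1 U2 p q J = glue U2 U1 q p J.
Proof.
move=> s1 s2 cons J; rewrite /glue setUC; case: ifP => HJ //.
rewrite [q _ * p _]mulrC [in RHS]setIAC cons //.
rewrite -setIA (coverI_tr tV s1 s2).
by apply: Jfam_restr HJ; apply: subset_trans (subsetIl _ _) (subsetUr _ _).
Qed.

Lemma glue_dist U1 U2 p q : U1 \subset V -> U2 \subset V ->
  dist U1 p -> dist U2 q ->
  (forall K, K \in Jfam (U1 :&: U2) -> marg p K = marg q K) ->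
  [/\ dist (U1 :|: U2) (glue U1 U2 p q),
      forall J1, J1 \in Jfam U1 -> marg (glue U1 U2 p q) J1 = p J1 &
      forall J2, J2 \in Jfam U2 -> marg (glue U1 U2 p q) J2 = q J2].
Proof.
move=> s1 s2 [p0 sp p1] [q0 sq q1] cons.
have m1 := glue_marg1 s1 s2 p0 sp q0 sq cons.
have m2 : forall J2, J2 \in Jfam U2 -> marg (glue U1 U2 p q) J2 = q J2.
  move=> J2 HJ2; rewrite /marg (eq_bigr _ (fun J _ => glue_sym s1 s2 cons J)).
  apply: (glue_marg1 s2 s1 q0 sq p0 sp) => // K; rewrite setIC => HK.
  by rewrite cons.
have sg : supp (U1 :|: U2) (glue U1 U2 p q).
  by move=> J; rewrite /glue => /negbTE ->.
split => //; split => //.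
  move=> J; rewrite /glue; case: ifP => // _.
  by apply: divr_ge0; [apply: mulr_ge0 | apply: marg_ge0].
rewrite -marg0 -(MM (U' := U1) sg (subsetUl _ _) (sub0set _)).
rewrite -p1 -marg0 (marg_supp _ sp); apply: eq_bigr => J /andP[HJ _].
exact: m1.
Qed.

End Glue.


Section Main.
Variable R : realType.
Variable n : nat.
Variable V : {set {set 'I_n}}.
Variable E : {set {set {set 'I_n}}}.
Variable t : rel {set {set 'I_n}}.
Variable w : {ffun {set 'I_n} -> R}.
Hypothesis tV : trivIset V.
Hypothesis cV : cover V = [set: 'I_n].
Hypothesis hE : forall e, e \in E -> (e \subset V) && (2 <= #|e|)%N.
Hypothesis jt : join_tree E t.
Hypothesis w0 : forall J, J \in JH V E -> 0 <= w J.
Hypothesis w1 : forall I, I \in V -> wsum w I = 1.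
Hypothesis c4 : forall e I i, e \in E -> I \in e -> i \in I ->
         w [set i] - \sum_(J in Jfam e | i \in J) w J = 0.
Hypothesis c5 : forall e e', e \in E -> e' \in E -> t e e' -> (1 < #|e :&: e'|)%N ->
         forall J0, J0 \in Jfam (e :&: e') ->
           \sum_(J in Jfam e | J0 \subset J) w J
             - \sum_(J in Jfam e' | J0 \subset J) w J = 0.

Implicit Types (U : {set {set 'I_n}}) (J K I : {set 'I_n}) (i : 'I_n) (p q : {set 'I_n} -> R).

Definition mu U J := if J \in Jfam U then w J else 0.

Lemma mu_supp U : supp U (mu U).
Proof. by move=> J /negbTE; rewrite /mu => ->. Qed.

Lemma cover1 I : cover [set I] = I.
Proof. by rewrite /cover big_set1. Qed.

Lemma single_in I i : i \in I -> [set i] \in Jfam [set I].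
Proof.
move=> iI; apply: Jfam_intro; first by rewrite cover1 sub1set.
by move=> I' /set1P ->; rewrite (setIidPl (_ : [set i] \subset I)) ?cards1 // sub1set.
Qed.

Lemma Jfam1 I J : J \in Jfam [set I] -> exists2 i, i \in I & J = [set i].
Proof.
move=> HJ; have := Jfam_card HJ (set11 I).
have sJ : J \subset I by rewrite -(cover1 I); exact: Jfam_sub.
rewrite (setIidPl sJ).
move/eqP/cards1P => [i ei]; exists i => //.
by move: sJ; rewrite ei sub1set.
Qed.

Lemma Jfam0 J : J \in Jfam set0 -> J = set0.
Proof.
move=> HJ; apply/eqP; rewrite -subset0; have := Jfam_sub HJ.
by rewrite /cover big_set0.
Qed.

Lemma set0_Jfam0 : set0 \in Jfam (set0 : {set {set 'I_n}}).
Proof. by apply: Jfam_intro; rewrite ?sub0set // => I; rewrite inE. Qed.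

Lemma E_sub e : e \in E -> e \subset V.
Proof. by case/hE/andP. Qed.

Lemma JH_E e J : e \in E -> J \in Jfam e -> J \in JH V E.
Proof. by move=> eE HJ; apply/bigcupP; exists e; rewrite // inE eE orbT. Qed.

Lemma JH_1 I J : I \in V -> J \in Jfam [set I] -> J \in JH V E.
Proof.
move=> IV HJ; apply/bigcupP; exists [set I] => //.
by rewrite inE; apply/orP; left; apply/imsetP; exists I.
Qed.

Lemma in_cover i : exists2 I, I \in V & i \in I.
Proof.
have : i \in cover V by rewrite cV inE.
by case/bigcupP => I; exists I.
Qed.

Lemma c4' e I i : e \in E -> I \in e -> i \in I ->
  \sum_(J in Jfam e | i \in J) w J = w [set i].
Proof. by move=> eE IE iI; apply/eqP; rewrite eq_sym -subr_eq0; apply/eqP; exact: c4 eE IE iI. Qed.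

Lemma mu_marg U K : marg (mu U) K = \sum_(J in Jfam U | K \subset J) w J.
Proof.
rewrite (marg_supp _ (@mu_supp U)); apply: eq_bigr => J /andP[HJ _].
by rewrite /mu HJ.
Qed.

Lemma sum_gen U I : I \in U -> I \in V ->
  (forall i, i \in I -> \sum_(J in Jfam U | i \in J) w J = w [set i]) ->
  \sum_(J in Jfam U) w J = 1.
Proof.
move=> IU IV h; rewrite -(w1 IV) /wsum.
transitivity (\sum_(i in I) \sum_(J in Jfam U | i \in J) w J); last first.
  by apply: eq_bigr => i /h.
under [RHS]eq_bigr do rewrite big_mkcondr.
rewrite exchange_big /=; apply: eq_bigr => J HJ.
have := Jfam_card HJ IU; move/eqP/cards1P => [x ex].
have xJI : x \in J :&: I by rewrite ex set11.
rewrite -big_mkcondr (big_pred1 x) // => i /=.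
apply/idP/idP => [/andP[iI iJ]|/eqP ->].
  have : i \in J :&: I by rewrite inE iJ iI.
  by rewrite ex => /set1P ->.
by rewrite inE in xJI; case/andP: xJI => -> ->.
Qed.

Lemma mu_dist U : (U \in E) || [exists I in V, U == [set I]] -> dist U (mu U).
Proof.
move=> hU; split; last 1 first.
- rewrite -marg0 mu_marg; under eq_bigl do rewrite sub0set andbT.
  case/orP: hU => [UE | /exists_inP[I IV /eqP ->]].
    have := hE UE => /andP[sU c2].
    have : (0 < #|U|)%N by apply: leq_trans c2.
    case/card_gt0P => I IU; apply: (sum_gen IU (subsetP sU _ IU)) => i.
    exact: c4' UE IU.
  apply: (sum_gen (set11 I) IV) => i iI.
  rewrite (big_pred1 [set i]) // => J /=; apply/idP/eqP => [/andP[HJ iJ]|->].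
    by case: (Jfam1 HJ) => j _ ej; move: iJ; rewrite ej => /set1P ->.
  by rewrite single_in // set11.
- move=> J; rewrite /mu; case: ifP => // HJ; apply: w0.
  case/orP: hU => [UE | /exists_inP[I IV /eqP eU]]; first exact: JH_E HJ.
  by rewrite eU in HJ; exact: JH_1 HJ.
- exact: mu_supp.
Qed.

Lemma sum_sub1 U i : \sum_(J in Jfam U | [set i] \subset J) w J = \sum_(J in Jfam U | i \in J) w J.
Proof. by apply: eq_bigl => J; rewrite sub1set. Qed.

Lemma edge_cons g f K : g \in E -> f \in E -> t g f -> K \subset cover (g :&: f) ->
  marg (mu g) K = marg (mu f) K.
Proof.
move=> gE fE tgf sK.
rewrite -(MM (@mu_supp g) (subsetIl g f) sK) -(MM (@mu_supp f) (subsetIr g f) sK).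
apply: eq_bigr => K' /andP[HK' _].
have [D0|DnO] := eqVneq (g :&: f) set0.
  rewrite D0 in HK'; rewrite (Jfam0 HK') !marg0.
  have [_ _ ->] := mu_dist (introT orP (or_introl gE)).
  by have [_ _ ->] := mu_dist (introT orP (or_introl fE)).
have : (0 < #|g :&: f|)%N by rewrite card_gt0.
rewrite leq_eqVlt => /orP[/eqP/esym/eqP/cards1P[I eI] | gt1].
  rewrite eI in HK'; have [i iI ->] := Jfam1 HK'.
  have : I \in g :&: f by rewrite eI set11.
  case/setIP => Ig If.
  by rewrite !mu_marg !sum_sub1 (c4' gE Ig iI) (c4' fE If iI).
apply/eqP; rewrite -subr_eq0; apply/eqP; rewrite !mu_marg; exact: c5.
Qed.

Definition US (S : {set {set {set 'I_n}}}) : {set {set 'I_n}} := \bigcup_(e in S) e.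
Definition conn (S : {set {set {set 'I_n}}}) := forall a b, a \in S -> b \in S ->
  exists ps : seq {set {set 'I_n}}, [/\ all (mem S) ps, path t a ps & last a ps = b].
Definition tinv (S : {set {set {set 'I_n}}}) p :=
  dist (US S) p /\ forall e J, e \in S -> J \in Jfam e -> marg p J = w J.

Lemma cross (S : {set {set {set 'I_n}}}) x (ps : seq {set {set 'I_n}}) : x \in S -> path t x ps -> last x ps \notin S ->
  exists g f, [/\ g \in S, f \notin S & t g f].
Proof.
elim: ps x => [|y ps IH] x xS /=; first by rewrite xS.
case/andP => txy py ly; case yS: (y \in S); first exact: IH y yS py ly.
by exists x, y; rewrite yS.
Qed.

Lemma tsym : symmetric t.
Proof. by case: jt => [[]]. Qed.

Lemma tE g f : t g f -> (g \in E) && (f \in E).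
Proof. by case: jt => [[]] h *; apply: h. Qed.

Lemma run_int (S : {set {set {set 'I_n}}}) g f h : S \subset E -> conn S -> g \in S ->
  f \in E -> f \notin S -> t g f -> h \in S -> f :&: h \subset g.
Proof.
move=> sE cS gS fE fS tgf hS.
have [p [allp pp lp]] := cS g h gS hS.
move: lp; case: (shortenP pp) => p' pp' up' sp' lp'.
have [_ jtP] := jt.
have hE' : h \in E := subsetP sE _ hS.
have neq : f != h by apply: contraNneq fS => ->.
have allS : all (mem S) (g :: p').
  rewrite /= gS /=; apply/allP => x /sp' xp.
  by move/allP: allp => /(_ x xp).
apply: (jtP f h fE hE' neq (g :: p')) => //.
- by rewrite /= tsym tgf pp'.
- rewrite cons_uniq up' andbT; apply: contraNN fS => fin.
  by move/allP: allS => /(_ f fin).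
- by rewrite !inE eqxx orbT.
Qed.

Lemma US_sub (S : {set {set {set 'I_n}}}) : S \subset E -> US S \subset V.
Proof.
move=> sE; apply/subsetP => I /bigcupP[e eS IE].
exact: (subsetP (E_sub (subsetP sE _ eS)) _ IE).
Qed.

Definition delta0 J : R := if J == set0 then 1 else 0.

Lemma mu_distE e : e \in E -> dist e (mu e).
Proof. by move=> eE; apply: mu_dist; rewrite eE. Qed.

Lemma tree_phase k : (k <= #|E|)%N ->
  exists S : {set {set {set 'I_n}}}, [/\ S \subset E, #|S| = k, conn S & exists p, tinv S p].
Proof.
elim: k => [_|k IH lek].
  exists set0; split; rewrite ?sub0set ?cards0 //.
    by move=> a b; rewrite inE.
  exists delta0; split; last by move=> e J; rewrite inE.
  rewrite /US big_set0; split.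
  - by move=> J; rewrite /delta0; case: ifP.
  - move=> J HJ; rewrite /delta0; case: eqP => // e0.
    by move: HJ; rewrite e0 set0_Jfam0.
  - exact: (sum_pred1 xpredT set0 (fun _ => 1)).
have [S [sE cnS cS [p [dp mp]]]] := IH (ltnW lek).
have /subsetPn [f0 f0E f0S] : ~~ (E \subset S).
  by apply: contraTN lek => /subset_leq_card; rewrite cnS -ltnNge ltnS.
case S0: (S == set0).
  move/eqP: S0 cnS => -> ; rewrite cards0 => <-.
  exists [set f0]; split; rewrite ?sub1set ?cards1 //.
  - by move=> a b /set1P -> /set1P ->; exists [::].
  - exists (mu f0); split; first by rewrite /US big_set1; exact: mu_distE.
    by move=> e J /set1P -> HJ; rewrite (marg_self (@mu_supp f0) HJ) /mu HJ.
have /set0Pn [g0 g0S] : S != set0 by rewrite S0.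
have [[_ _ _ cE _] _] := jt.
have [pp [_ ppp lpp]] := cE g0 f0 (subsetP sE _ g0S) f0E.
have [g [f [gS fS tgf]]] := cross g0S ppp (ltac:(by rewrite lpp)).
have /andP[gE fE] := tE tgf.
set U1 := US S.
have cons : forall K, K \in Jfam (U1 :&: f) -> marg p K = marg (mu f) K.
  move=> K HK.
  have sC : U1 :&: f \subset g :&: f.
    apply/subsetP => I /setIP[/bigcupP[h hS Ih] If]; rewrite inE If andbT.
    by apply: (subsetP (run_int sE cS gS fE fS tgf hS)); rewrite inE If Ih.
  have sK : K \subset cover (g :&: f) := subset_trans (Jfam_sub HK) (cover_sub sC).
  rewrite -(edge_cons gE fE tgf sK).
  case: dp => _ sp _.
  apply: (marg_lift sp (@mu_supp g)).
  - exact: bigcup_sup.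
  - by move=> J1 HJ1; rewrite /mu HJ1; exact: (mp g J1 gS HJ1).
  - exact: subset_trans sK (cover_sub (subsetIl g f)).
have [dg m1 m2] := glue_dist tV (US_sub sE) (E_sub fE) dp (mu_distE fE) cons.
exists (f |: S); split.
- by rewrite subUset sub1set fE sE.
- by rewrite cardsU1 fS cnS.
- have subS : forall q : seq {set {set 'I_n}}, all (mem S) q -> all (mem (f |: S)) q.
    by move=> q; apply: sub_all => x /= xS; rewrite inE xS orbT.
  move=> a b /setU1P[->|aS] /setU1P[->|bS].
  + by exists [::].
  + have [q [aq pq lq]] := cS g b gS bS.
    exists (g :: q); split => /=; last by [].
      by rewrite inE gS orbT subS.
    by rewrite tsym tgf pq.
  + have [q [aq pq lq]] := cS a g aS gS.
    exists (rcons q f); split; last by rewrite last_rcons.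
      by rewrite all_rcons subS // andbT; exact: setU11.
    by rewrite rcons_path pq lq tgf.
  + have [q [aq pq lq]] := cS a b aS bS.
    by exists q; split; rewrite ?subS.
- exists (glue U1 f p (mu f)); split.
    by rewrite /US bigcup_setU big_set1 setUC.
  move=> e J /setU1P[->|eS] HJ; first by rewrite m2 // /mu HJ.
  case: dp => _ sp _; case: dg => _ sg _.
  rewrite (marg_lift sg sp (subsetUl _ _) m1); first exact: (mp e J eS HJ).
  exact: subset_trans (Jfam_sub HJ) (cover_sub (bigcup_sup _ eS)).
Qed.

Definition UE := US E.
Definition vinv U p := [/\ dist U p, (forall e J, e \in E -> J \in Jfam e -> marg p J = w J)
  & (forall I i, I \in U -> i \in I -> marg p [set i] = w [set i])].

Lemma UE_sub : UE \subset V.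
Proof. exact: US_sub (subxx E). Qed.

Lemma base : exists p, vinv UE p.
Proof.
have [S [sE cS _ [p [dp mp]]]] := tree_phase (leqnn #|E|).
have eS : S = E by apply/eqP; rewrite eqEcard sE cS leqnn.
subst S; exists p; split => // I i /bigcupP[e eE Ie] iI.
case: (dp) => _ sp _.
rewrite (marg_lift sp (@mu_supp e) (bigcup_sup _ eE)).
- by rewrite mu_marg sum_sub1 (c4' eE Ie iI).
- by move=> J1 HJ1; rewrite /mu HJ1; exact: (mp e J1 eE HJ1).
- by rewrite sub1set; apply/bigcupP; exists I.
Qed.

Lemma vphase (s : seq {set 'I_n}) : all (mem V) s ->
  exists p, vinv (UE :|: [set I | I \in s]) p.
Proof.
elim: s => [_|I s IH] /=.
  have -> : UE :|: [set I | I \in [::]] = UE by apply/setP => x; rewrite !inE orbF.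
  exact: base.
case/andP => IV sV; have [p [dp mE mS]] := IH sV.
set U := UE :|: [set I0 | I0 \in s].
have eU : UE :|: [set I0 | I0 \in I :: s] = U :|: [set I].
  apply/setP => x; rewrite !inE.
  by case: (x \in UE); case: (x == I); case: (x \in s).
rewrite eU.
have UV : U \subset V.
  rewrite subUset UE_sub /=; apply/subsetP => x; rewrite inE => xs.
  by move/allP: sV => /(_ x xs).
have dI : dist [set I] (mu [set I]).
  by apply: mu_dist; apply/orP; right; apply/exists_inP; exists I.
case IU: (I \in U).
  by rewrite (setUidPl _) ?sub1set //; exists p.
have cons : forall K, K \in Jfam (U :&: [set I]) -> marg p K = marg (mu [set I]) K.
  move=> K; have -> : U :&: [set I] = set0.
    by apply/setP => x; rewrite in_setI in_set1 in_set0; case: eqP => [->|]; rewrite ?IU ?andbF.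
  move/Jfam0 => ->; rewrite !marg0; case: dp => _ _ ->.
  by case: dI => _ _ ->.
have IV1 : [set I] \subset V by rewrite sub1set.
have [dg m1 m2] := glue_dist tV UV IV1 dp dI cons.
exists (glue U [set I] p (mu [set I])); split => //.
  move=> e J eE HJ; case: (dp) => _ sp _; case: (dg) => _ sg _.
  rewrite (marg_lift sg sp (subsetUl _ _) m1); first exact: (mE e J eE HJ).
  apply: subset_trans (Jfam_sub HJ) (cover_sub _).
  exact: subset_trans (bigcup_sup _ eE) (subsetUl _ _).
move=> I' i /setUP[I'U|/set1P ->] iI.
  case: (dp) => _ sp _; case: (dg) => _ sg _.
  rewrite (marg_lift sg sp (subsetUl _ _) m1); first exact: (mS I' i I'U iI).
  by rewrite sub1set; apply/bigcupP; exists I'.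
by rewrite m2 ?single_in // /mu single_in.
Qed.

Lemma final_dist : exists p, [/\ dist V p,
  (forall e J, e \in E -> J \in Jfam e -> marg p J = w J) &
  (forall i, marg p [set i] = w [set i])].
Proof.
have [|p [dp mE mS]] := @vphase (enum V).
  by apply/allP => x; rewrite mem_enum.
have eV : UE :|: [set I | I \in enum V] = V.
  have -> : [set I | I \in enum V] = V by apply/setP => x; rewrite inE mem_enum.
  exact/setUidPr/UE_sub.
rewrite eV in dp mS; exists p; split => // i.
by have [I IV iI] := in_cover i; exact: mS IV iI.
Qed.

End Main.


Section Final.
Variable R : realType.
Variable n : nat.
Variable V : {set {set 'I_n}}.
Variable E : {set {set {set 'I_n}}}.
Hypothesis cV : cover V = [set: 'I_n].
Hypothesis hE : forall e, e \in E -> (e \subset V) && (2 <= #|e|)%N.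
Implicit Types (U : {set {set 'I_n}}) (J K I S : {set 'I_n}) (i : 'I_n).

Definition pt S : vec R n := [ffun J => if (J \in JH V E) && (J \subset S) then 1 else 0].
Definition delta S J : R := if J == S then 1 else 0.

Lemma single_JH i : [set i] \in JH V E.
Proof. by have [I IV iI] := in_cover cV i; exact: JH_1 IV (single_in iI). Qed.

Lemma prod_ind J S : \prod_(i in J) (if i \in S then 1 else 0 : R) = if J \subset S then 1 else 0.
Proof.
case: ifP => s; first by apply: big1 => i iJ; rewrite (subsetP s i iJ).
case/negbT/subsetPn: s => x xJ xS.
by rewrite (bigD1 x) //= (negbTE xS) mul0r.
Qed.

Lemma sum_ind I S x : S :&: I = [set x] ->
  \sum_(i in I) (if i \in S then 1 else 0 : R) = 1.
Proof.
move=> ex; have xJI : x \in S :&: I by rewrite ex set11.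
rewrite -big_mkcondr (big_pred1 x) // => i /=.
apply/idP/idP => [/andP[iI iJ]|/eqP ->].
  have : i \in S :&: I by rewrite inE iJ iI.
  by rewrite ex => /set1P ->.
by rewrite inE in xJI; case/andP: xJI => -> ->.
Qed.

Lemma pt_SH S : S \in Jfam V -> SH V E (pt S).
Proof.
move=> HS; split.
- by move=> J /negbTE HJ; rewrite ffunE HJ.
- by move=> J _; rewrite ffunE; case: ifP; [right|left].
- move=> I IV; rewrite /wsum.
  have := Jfam_card HS IV; move/eqP/cards1P => [x ex].
  rewrite -(sum_ind ex); apply: eq_bigr => i _.
  by rewrite ffunE single_JH sub1set.
- move=> J HJ _; rewrite ffunE HJ /= -prod_ind; apply: eq_bigr => i _.
  by rewrite ffunE single_JH sub1set.
Qed.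

Lemma delta_supp S : S \in Jfam V -> supp V (delta S).
Proof. by move=> HS J HJ; rewrite /delta; case: eqP => // e; rewrite e HS in HJ. Qed.

Lemma marg_delta S J : marg (delta S) J = if J \subset S then 1 else 0.
Proof. exact: (sum_pred1 (fun J' => J \subset J') S (fun _ => 1)). Qed.

Lemma JH_nonempty J : J \in JH V E -> J != set0.
Proof.
case/bigcupP => e he HJ.
have [I Ie] : exists I, I \in e.
  case/setUP: he => [/imsetP[I _ ->]|eE]; first by exists I; rewrite set11.
  have /andP[_ c2] := hE eE.
  have : (0 < #|e|)%N by apply: leq_trans c2.
  by case/card_gt0P => I; exists I.
apply/set0Pn; have /eqP/cards1P[x ex] := Jfam_card HJ Ie.
have xJI : x \in J :&: I by rewrite ex set11.
by exists x; case/setIP: xJI.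
Qed.

Lemma SH_char (x : vec R n) : SH V E x ->
  exists S, S \in Jfam V /\ forall J, J \in JH V E -> x J = marg (delta S) J.
Proof.
case=> sx x01 ws xp.
set S := [set i | x [set i] == 1].
have x1 : forall i, x [set i] = if i \in S then 1 else 0.
  move=> i; rewrite inE; case: eqP => // h.
  by case: (x01 _ (single_JH i)).
exists S; split.
  apply: Jfam_intro; first by rewrite cV subsetT.
  move=> I IV; have := ws I IV; rewrite /wsum.
  under eq_bigr do rewrite x1.
  rewrite -big_mkcondr.
  rewrite (eq_bigl (fun i => i \in S :&: I)); last by move=> i; rewrite in_setI andbC.
  rewrite sumr_const => /eqP; rewrite -[1]/(1%:R) eqr_nat => /eqP.
  by [].
move=> J HJ; rewrite marg_delta -prod_ind.
have [le1|gt1] := leqP #|J| 1.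
  have : (0 < #|J|)%N by rewrite card_gt0 JH_nonempty.
  move=> c0; have : #|J| == 1%N by rewrite eqn_leq le1 c0.
  by case/cards1P => i ->; rewrite big_set1 x1.
by rewrite xp //; apply: eq_bigr => i _; rewrite x1.
Qed.

End Final.

Unset Implicit Arguments.

Theorem theorem1p1 (R : realType) (n : nat) (V : {set {set 'I_n}})
  (E : {set {set {set 'I_n}}}) (t : rel {set {set 'I_n}}) :
  partition V [set: 'I_n] ->
  (forall I, I \in V -> (2 <= #|I|)%N) ->
  (forall e, e \in E -> (e \subset V) && (2 <= #|e|)%N) ->
  alpha_acyclic E ->
  join_tree E t ->
  forall w : {ffun {set 'I_n} -> R}, MC V E w <-> RHSpolytope V E t w.
Proof.
move=> part _ hE _ jt w.
case/and3P: part => /eqP cV tV _.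
split.
- case=> k [pts [lam [Hpts lam0 lam1 Hw]]].
  have lin : forall (P : pred {set 'I_n}),
      \sum_(J | P J) w J = \sum_(j < k) lam j * \sum_(J | P J) pts j J.
    move=> P; under eq_bigr do rewrite Hw.
    by rewrite exchange_big; apply: eq_bigr => j _; rewrite mulr_sumr.
  have key : forall j, exists S : {set 'I_n}, (forall (e : {set {set 'I_n}}) (K : {set 'I_n}), e \in E -> K \subset cover e ->
      \sum_(J in Jfam e | K \subset J) pts j J = marg (delta R S) K) /\
      (forall J, J \in JH V E -> pts j J = marg (delta R S) J).
    move=> j; have [S [HS hx]] := SH_char cV hE (Hpts j).
    exists S; split => // e K eE sK.
    rewrite -(MM (delta_supp R HS) (E_sub hE eE) sK).
    by apply: eq_bigr => J /andP[HJ _]; rewrite hx //; exact: JH_E HJ.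
  split.
  + move=> J HJ; rewrite Hw big1 // => j _.
    by have [sx _ _ _] := Hpts j; rewrite sx // mulr0.
  + move=> J HJ; rewrite Hw; apply: sumr_ge0 => j _; apply: mulr_ge0 => //.
    by have [_ x01 _ _] := Hpts j; case: (x01 J HJ) => ->.
  + move=> I IV; rewrite /wsum; under eq_bigr do rewrite Hw.
    rewrite exchange_big -[RHS]lam1; apply: eq_bigr => j _; rewrite -mulr_sumr.
    by have [_ _ ws _] := Hpts j; have := ws I IV; rewrite /wsum => ->; rewrite mulr1.
  + move=> e I i eE Ie iI.
    rewrite Hw (lin (fun J => (J \in Jfam e) && (i \in J))) -sumrB big1 // => j _.
    rewrite -mulrBr; have [S [k1 k2]] := key j.
    rewrite (eq_bigl (fun J => (J \in Jfam e) && ([set i] \subset J))); last first.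
      by move=> J; rewrite sub1set.
    rewrite k1 // ?k2 ?subrr ?mulr0 //; first exact: single_JH.
    by rewrite sub1set; apply/bigcupP; exists I.
  + move=> e e' eE e'E tee' c1 J0 HJ0.
    rewrite (lin (fun J => (J \in Jfam e) && (J0 \subset J))).
    rewrite (lin (fun J => (J \in Jfam e') && (J0 \subset J))) -sumrB big1 // => j _.
    rewrite -mulrBr; have [S [k1 _]] := key j.
    rewrite (k1 e J0 eE) ?(k1 e' J0 e'E) ?subrr ?mulr0 //.
      exact: subset_trans (Jfam_sub HJ0) (cover_sub (subsetIr e e')).
    exact: subset_trans (Jfam_sub HJ0) (cover_sub (subsetIl e e')).
- case=> sw w0 w1 c4 c5.
  have [p [dp mE mS]] := final_dist tV cV hE jt w0 w1 c4 c5.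
  case: dp => p0 sp p1.
  have sumV : forall F : {set 'I_n} -> R, (forall S, S \notin Jfam V -> F S = 0) ->
      \sum_(S in Jfam V) F S = \sum_S F S.
    move=> F hF; rewrite [RHS](bigID (fun S => S \in Jfam V)) /= [X in _ + X]big1 ?addr0 // => S /hF.
  exists #|Jfam V|, (fun j => pt R V E (enum_val j)), (fun j => p (enum_val j)); split.
  + move=> j; apply: pt_SH => //; exact: enum_valP.
  + by move=> j; exact: p0.
  + by rewrite -big_enum_val sumV.
  + move=> J.
    transitivity (\sum_(S in Jfam V) p S * pt R V E S J); last exact: big_enum_val.
    case HJ: (J \in JH V E); last first.
      by rewrite sw ?HJ // big1 // => S _; rewrite ffunE HJ /= mulr0.
    under eq_bigr => S _ do rewrite ffunE HJ /= (fun_if (fun x => p S * x)) mulr1 mulr0.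
    rewrite -big_mkcondr -(marg_supp _ sp).
    case/bigcupP: HJ => e /setUP[/imsetP[I IV ->]|eE] HJe; last by rewrite (mE e J eE HJe).
    by have [i _ ->] := Jfam1 HJe; rewrite mS.
Qed.
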